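(* Let $W$ be an irreducible euclidean Coxeter group not of type $\widetilde A_n$ and $\sigma$ a chamber of its Coxeter complex, with bipartite faces $F_0,F_1$, bipartite subspaces $B_0,B_1$ and closest points $x_0\in B_0$, $x_1\in B_1$. Then for $i=0,1$, the point $x_i$ lies in the (relative) interior of the face $F_i$. In particular, the bipartite line of $\sigma$ intersects the interior of $\sigma$.
   Context: $W$ acts on a euclidean space $E$, generated by reflections in the facets of a euclidean simplex with dihedral angles submultiples of $\pi$, properly and cocompactly; chambers are images of this simplex. The diagram $\Gamma$ (a tree here) has a unique bipartition, giving a partition $S_0\sqcup S_1$ of the reflections in the facets of $\sigma$; $F_j$ (bipartite face) is the face of $\sigma$ obtained by intersecting $\sigma$ with the hyperplanes of the reflections in $S_j$, and $B_j$ (bipartite subspace) is the affine hull of $F_j$. $B_0,B_1$ are disjoint and $x_0,x_1$ are the unique points realizing the minimal distance between them; the bipartite line is the line through $x_0$ and $x_1$. *)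

(* Defs.v *)
From HB Require Import structures.
From mathcomp Require Import all_boot all_order all_algebra.
From mathcomp Require Import all_classical all_reals all_analysis.
From mathcomp Require Import fingroup perm.
Set Implicit Arguments. Unset Strict Implicit. Unset Printing Implicit Defensive.
Import Order.TTheory GRing.Theory Num.Theory.
Import numFieldNormedType.Exports.
Local Open Scope classical_set_scope.
Local Open Scope ring_scope.

Definition dotp {R : realType} {n : nat} (u v : 'rV[R]_n) : R := (u *m v^T) 0 0.

(* A euclidean simplex given by n+1 facet hyperplanes  <a i, x> = b i,
   with outward normals a i:  sigma = { x | <a i, x> <= b i for all i }. *)
Definition chamber {R : realType} {n : nat}
  (a : 'I_n.+1 -> 'rV[R]_n) (b : 'I_n.+1 -> R) : set 'rV[R]_n :=
  [set x | forall i, dotp (a i) x <= b i].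

Definition diagram_edge {n : nat} (m : 'I_n.+1 -> 'I_n.+1 -> nat) : rel 'I_n.+1 :=
  fun i j => (i != j) && (3 <= m i j)%N.

Definition irreducible_diagram {n : nat} (m : 'I_n.+1 -> 'I_n.+1 -> nat) : Prop :=
  forall i j, connect (diagram_edge m) i j.

(* Type  ~A_n : the diagram is a cycle through all n+1 nodes with all labels 3
   (for n >= 2; the labels of non-adjacent nodes are 2). *)
Definition type_Atilde {n : nat} (m : 'I_n.+1 -> 'I_n.+1 -> nat) : Prop :=
  exists p : {perm 'I_n.+1}, forall k l : 'I_n.+1, k != l ->
    m (p k) (p l) =
      (if ((l : nat) == (k.+1 %% n.+1)%N) || ((k : nat) == (l.+1 %% n.+1)%N)
       then 3 else 2)%N.

(* The face of sigma cut out by the facet hyperplanes of the reflections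
   whose colour is j (bipartite face F_j). *)
Definition bip_face {R : realType} {n : nat}
  (a : 'I_n.+1 -> 'rV[R]_n) (b : 'I_n.+1 -> R) (c : 'I_n.+1 -> bool) (j : bool)
  : set 'rV[R]_n :=
  [set x | chamber a b x /\ forall i, c i = j -> dotp (a i) x = b i].

Definition affine_hull {R : realType} {n : nat} (A : set 'rV[R]_n) : set 'rV[R]_n :=
  [set y | exists (k : nat) (w : 'I_k -> R) (p : 'I_k -> 'rV[R]_n),
      \sum_(t < k) w t = 1 /\ (forall t, A (p t)) /\ y = \sum_(t < k) w t *: p t].

Definition rel_interior {R : realType} {n : nat} (A : set 'rV[R]_n) : set 'rV[R]_n :=
  [set x | A x /\ exists e : R, 0 < e /\
      forall y, affine_hull A y -> dotp (y - x) (y - x) < e ^+ 2 -> A y].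

(* Main.v *)
Set Warnings "-all".
Require Import Defs.
From HB Require Import structures.
From mathcomp Require Import all_boot all_order all_algebra.
From mathcomp Require Import all_classical all_reals all_analysis.
From mathcomp Require Import fingroup perm.
From mathcomp.algebra_tactics Require Import ring lra.
Import Order.TTheory GRing.Theory Num.Theory.
Import numFieldNormedType.Exports.
Local Open Scope classical_set_scope.
Local Open Scope ring_scope.

Section Dot.
Context {R : realType} {n : nat}.
Implicit Types u v w : 'rV[R]_n.

Lemma dotpE u v : dotp u v = \sum_j u 0 j * v 0 j.
Proof. by rewrite /dotp !mxE; apply: eq_bigr => j _; rewrite !mxE. Qed.

Lemma dotpC u v : dotp u v = dotp v u.
Proof. by rewrite !dotpE; apply: eq_bigr => j _; rewrite mulrC. Qed.

Lemma dotpDr u v w : dotp u (v + w) = dotp u v + dotp u w.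
Proof. by rewrite !dotpE -big_split; apply: eq_bigr => j _; rewrite !mxE mulrDr. Qed.

Lemma dotpZr u v (k : R) : dotp u (k *: v) = k * dotp u v.
Proof. by rewrite !dotpE mulr_sumr; apply: eq_bigr => j _; rewrite !mxE mulrCA. Qed.

Lemma dotpNr u v : dotp u (- v) = - dotp u v.
Proof. by rewrite -scaleN1r dotpZr mulN1r. Qed.

Lemma dotpBr u v w : dotp u (v - w) = dotp u v - dotp u w.
Proof. by rewrite dotpDr dotpNr. Qed.

Lemma dotp0r u : dotp u 0 = 0.
Proof. by rewrite dotpE big1 // => j _; rewrite mxE mulr0. Qed.

Lemma dotpDl u v w : dotp (v + w) u = dotp v u + dotp w u.
Proof. by rewrite dotpC dotpDr !(dotpC u). Qed.
Lemma dotpZl u v (k : R) : dotp (k *: v) u = k * dotp v u.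
Proof. by rewrite dotpC dotpZr dotpC. Qed.
Lemma dotpNl u v : dotp (- v) u = - dotp v u.
Proof. by rewrite dotpC dotpNr dotpC. Qed.
Lemma dotpBl u v w : dotp (v - w) u = dotp v u - dotp w u.
Proof. by rewrite dotpC dotpBr !(dotpC u). Qed.

Lemma dotp_sumr u k (w : 'I_k -> R) (p : 'I_k -> 'rV[R]_n) :
  dotp u (\sum_(t < k) w t *: p t) = \sum_(t < k) w t * dotp u (p t).
Proof.
elim/big_rec2: _ => [|t x y _ <-]; first by rewrite dotp0r.
by rewrite dotpDr dotpZr.
Qed.

Lemma dotp_sum u (I : Type) (r : seq I) (P : pred I) (F : I -> 'rV[R]_n) :
  dotp u (\sum_(t <- r | P t) F t) = \sum_(t <- r | P t) dotp u (F t).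
Proof.
elim/big_rec2: _ => [|t x y _ <-]; first by rewrite dotp0r.
by rewrite dotpDr.
Qed.

Lemma dotp_ge0 u : 0 <= dotp u u.
Proof. by rewrite dotpE sumr_ge0 // => j _; rewrite -expr2 sqr_ge0. Qed.

Lemma dotp_eq0 u : dotp u u = 0 -> u = 0.
Proof.
rewrite dotpE => /eqP; rewrite psumr_eq0; last by move=> j _; rewrite -expr2 sqr_ge0.
move=> /allP H; apply/rowP => j; rewrite mxE.
have := H j (mem_index_enum j); rewrite /= mulf_eq0 orbb => /eqP //.
Qed.

Lemma dotp_small u d (e : R) : 0 < e -> dotp u u = 1 -> dotp d d < e ^+ 2 ->
  dotp u d < e.
Proof.
move=> e0 u1 dd.
have := dotp_ge0 (e *: u - d).
rewrite dotpBl !dotpBr !dotpZl !dotpZr u1 (dotpC d u) => H.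
have : 2 * e * dotp u d < 2 * e * e by nra.
by rewrite ltr_pM2l ?mulr_gt0.
Qed.

End Dot.
Section Geo.
Variables (R : realType) (n : nat).
Variables (a : 'I_n.+1 -> 'rV[R]_n) (b : 'I_n.+1 -> R).
Variables (xs : 'rV[R]_n) (M : R).
Hypothesis xs_int : forall i, dotp (a i) xs < b i.
Hypothesis bnd : forall x, chamber a b x -> dotp x x <= M.

Lemma recession p d : chamber a b p -> (forall i, dotp (a i) d <= 0) -> d = 0.
Proof.
move=> cp dn; apply: dotp_eq0.
have H s : 0 <= s -> dotp p p + 2 * s * dotp p d + s ^+ 2 * dotp d d <= M.
  move=> s0; have : chamber a b (p + s *: d).
    move=> i; rewrite dotpDr dotpZr; have := cp i; have := dn i; nra.
  move=> /bnd; rewrite !dotpDl !dotpDr !dotpZl !dotpZr (dotpC d p); nra.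
apply/eqP; rewrite eq_le dotp_ge0 andbT; apply/negP => /negP; rewrite -ltNge => D0.
set D := dotp d d in H D0; set c := dotp p d in H; set P := dotp p p in H.
have P0 : 0 <= P by apply: dotp_ge0.
set s := 1 + (`|M| + 2 * `|c| + 1) / D.
have s1 : 1 <= s by rewrite lerDl divr_ge0 // ?ltW //; lra.
have sD : s * D = D + (`|M| + 2 * `|c| + 1) by rewrite mulrDl mul1r divfK ?gt_eqF.
have := H s (le_trans ler01 s1).
have cc : - `|c| <= c by rewrite lerNl -normrN ler_norm.
have MM : M <= `|M| by rewrite ler_norm.
have hsc : - (2 * s * `|c|) <= 2 * s * c by nra.
have s2 : s ^+ 2 * D = s * (D + (`|M| + 2 * `|c| + 1)) by rewrite -sD expr2 mulrA.
rewrite s2 => HH.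
have : s * (`|M| + 1) <= M by nra.
have : `|M| + 1 <= s * (`|M| + 1) by rewrite ler_peMl // addr_ge0.
lra.
Qed.

Lemma kernel k y : (forall i, i != k -> dotp (a i) y = 0) -> y = 0.
Proof.
have cxs : chamber a b xs by move=> i; apply: ltW.
move=> Hy; have [hk|hk] := lerP (dotp (a k) y) 0.
  apply: (@recession xs y cxs) => i; have [->//|ik] := eqVneq i k.
  by rewrite Hy.
apply/eqP; rewrite -oppr_eq0; apply/eqP; apply: (@recession xs (- y) cxs) => i.
rewrite dotpNr; have [->|ik] := eqVneq i k; first by rewrite oppr_le0 ltW.
by rewrite Hy // oppr0.
Qed.

Lemma vertex_ex k : exists v, forall i, i != k -> dotp (a i) v = b i.
Proof.
pose Mk : 'M[R]_n := \matrix_(r, c) a (lift k c) 0 r.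
have E v c : (v *m Mk) 0 c = dotp (a (lift k c)) v.
  by rewrite dotpC dotpE mxE; apply: eq_bigr => r _; rewrite mxE.
have U : Mk \in unitmx.
  rewrite unitmxE unitfE; apply/negP => /det0P [v v0 vM].
  suff : v = 0 by move/eqP: v0.
  apply: (@kernel k) => i ik.
  rewrite eq_sym in ik; have [c -> _] := unlift_some ik.
  by rewrite -E vM mxE.
pose bk : 'rV[R]_n := \row_c b (lift k c).
exists (bk *m invmx Mk) => i ik.
rewrite eq_sym in ik; have [c -> _] := unlift_some ik.
by rewrite -E mulmxKV // mxE.
Qed.

End Geo.
Section Core.
Context {R : realType} {n : nat}.
Variables (a : 'I_n.+1 -> 'rV[R]_n) (b : 'I_n.+1 -> R).
Variables (xs : 'rV[R]_n) (M : R).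
Hypothesis xs_int : forall i, dotp (a i) xs < b i.
Hypothesis bnd : forall x, chamber a b x -> dotp x x <= M.
Variable v : 'I_n.+1 -> 'rV[R]_n.
Hypothesis hv : forall k i, i != k -> dotp (a i) (v k) = b i.
Let sg l := b l - dotp (a l) (v l).
Hypothesis sg_pos : forall l, 0 < sg l.

Lemma span_vert k z :
  z = - \sum_l (dotp (a l) z / sg l) *: (v l - v k).
Proof.
apply/eqP; rewrite -subr_eq0 opprK; apply/eqP.
apply: (@kernel _ _ a b xs M xs_int bnd k) => i ik.
rewrite dotpDr (bigD1 i) //= dotpDr dotpZr dotpBr (hv _ _ ik).
rewrite dotp_sum big1 ?addr0.
  by rewrite /sg; have := sg_pos i; rewrite /sg => H; field; rewrite gt_eqF.
move=> l li; rewrite dotpZr dotpBr (hv _ _ ik) hv ?subrr ?mulr0 //.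
by rewrite eq_sym.
Qed.

Variables (c : 'I_n.+1 -> bool) (col : bool) (P Q : 'rV[R]_n).
Hypothesis oP : forall l, c l = ~~ col -> dotp (P - Q) (v l - P) = 0.
Hypothesis oQ : forall l, c l = col -> dotp (P - Q) (v l - Q) = 0.

Lemma core_id k z : c k = ~~ col ->
  dotp (P - Q) z = dotp (P - Q) (P - Q) * \sum_(l | c l == col) dotp (a l) z / sg l.
Proof.
move=> ck; rewrite {1}(span_vert k z) dotpNr dotp_sum.
rewrite (bigID (fun l => c l == col)) /= [X in _ + X]big1 ?addr0.
  rewrite mulr_sumr -sumrN; apply: eq_bigr => l /eqP cl.
  have h1 := oQ _ cl; have h2 := oP _ ck.
  rewrite !dotpBr in h1 h2 *; rewrite dotpZr dotpBr; set f := _ / _.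
  have -> : dotp (P - Q) (v l) - dotp (P - Q) (v k) = - (dotp (P - Q) P - dotp (P - Q) Q) by lra.
  ring.
move=> l cl; have cl' : c l = ~~ col by move: cl; case: (c l); case: col.
have h1 := oP _ cl'; have h2 := oP _ ck.
rewrite !dotpBr in h1 h2 *; rewrite dotpZr dotpBr.
have -> : dotp (P - Q) (v l) - dotp (P - Q) (v k) = 0 by lra.
by rewrite mulr0.
Qed.

End Core.
Section Aux.
Context {R : realType} {n : nat}.
Implicit Types (a : 'I_n.+1 -> 'rV[R]_n) (b : 'I_n.+1 -> R).

Lemma aff_tight a b c j y i : affine_hull (bip_face a b c j) y -> c i = j ->
  dotp (a i) y = b i.
Proof.
move=> [k [w [p [w1 [Hp ->]]]]] ci; rewrite dotp_sumr.
under eq_bigr => t _ do rewrite (proj2 (Hp t) i ci).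
by rewrite -mulr_suml w1 mul1r.
Qed.

Lemma aff_add (A : set 'rV[R]_n) y p s : affine_hull A y -> A p ->
  affine_hull A ((1 - s) *: y + s *: p).
Proof.
move=> [k [w [q [w1 [Hq ->]]]]] Ap.
exists k.+1, (fun t => if unlift ord0 t is Some t' then (1 - s) * w t' else s),
  (fun t => if unlift ord0 t is Some t' then q t' else p).
split; [|split].
- rewrite big_ord_recl /= unlift_none.
  under eq_bigr => t _ do rewrite liftK.
  by rewrite -mulr_sumr w1 mulr1 addrC subrK.
- by move=> t; case: (unlift _ t).
- rewrite big_ord_recl /= unlift_none.
  under [X in _ = _ + X]eq_bigr => t _ do rewrite liftK.
  by rewrite scaler_sumr addrC; congr (_ + _); apply: eq_bigr => t _; rewrite scalerA.
Qed.

Lemma orth_min (w d : 'rV[R]_n) :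
  (forall s : R, dotp w w <= dotp (w + s *: d) (w + s *: d)) -> dotp w d = 0.
Proof.
move=> H; set c := dotp w d; set D := dotp d d.
have D0 : 0 <= D by apply: dotp_ge0.
have := H (- c / (D + 1)).
rewrite !dotpDl !dotpDr !dotpZl !dotpZr (dotpC d w) -/c -/D => h.
have D1 : 0 < D + 1 by lra.
set s := - c / (D + 1) in h.
have sD : s * (D + 1) = - c by rewrite /s divfK ?gt_eqF.
have cE : c = - (s * (D + 1)) by rewrite sD opprK.
rewrite cE in h *.
have hs : s * s * (D + 2) <= 0 by nra.
have s0 : s * s <= 0.
  by rewrite -(pmulr_lle0 _ (_ : 0 < D + 2)) //; lra.
have : s = 0.
  by apply/eqP; rewrite -sqrf_eq0 expr2 eq_le s0 /= -expr2 sqr_ge0.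
by move=> ->; rewrite mul0r oppr0.
Qed.

End Aux.
Section Cos.
Context {R : realType}.
Lemma cos_pim_ge0 (m : nat) : (2 <= m)%N -> 0 <= cos (pi / m%:R : R).
Proof.
move=> m2; apply: cos_ge0_pihalf.
have p0 := @pi_gt0 R.
have m0 : (2 : R) <= m%:R by rewrite (ler_nat R 2 m).
have mp : (0 : R) < m%:R by lra.
apply/andP; split.
  by apply: (le_trans (y := 0)); [rewrite oppr_le0 divr_ge0 ?ltW | rewrite divr_ge0 ?ltW].
rewrite ler_pdivrMr //.
have -> : (pi : R) / 2 * m%:R = pi * (m%:R / 2) by ring.
rewrite -{1}(mulr1 pi) ler_pM2l //; lra.
Qed.

Lemma cos_pim_gt0 (m : nat) : (3 <= m)%N -> 0 < cos (pi / m%:R : R).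
Proof.
move=> m3; apply: cos_gt0_pihalf.
have p0 := @pi_gt0 R.
have m0 : (3 : R) <= m%:R by rewrite (ler_nat R 3 m).
have mp : (0 : R) < m%:R by lra.
apply/andP; split.
  by apply: (lt_le_trans (y := 0)); [rewrite oppr_lt0 divr_gt0 | rewrite divr_ge0 ?ltW].
rewrite ltr_pdivrMr //.
have -> : (pi : R) / 2 * m%:R = pi * (m%:R / 2) by ring.
rewrite -{1}(mulr1 pi) ltr_pM2l //; lra.
Qed.
End Cos.
Section Side.
Context {R : realType} {n : nat}.
Variables (a : 'I_n.+1 -> 'rV[R]_n) (b : 'I_n.+1 -> R) (m : 'I_n.+1 -> 'I_n.+1 -> nat).
Hypothesis n_gt0 : (0 < n)%N.
Hypothesis a_unit : forall i, dotp (a i) (a i) = 1.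
Hypothesis angles : forall i j, i != j ->
     (2 <= m i j)%N /\ dotp (a i) (a j) = - cos (pi / (m i j)%:R).
Variables (xs : 'rV[R]_n) (M : R).
Hypothesis xs_int : forall i, dotp (a i) xs < b i.
Hypothesis bnd : forall x, chamber a b x -> dotp x x <= M.
Hypothesis irr : irreducible_diagram m.
Variable c : 'I_n.+1 -> bool.
Hypothesis c_bip : forall i j, diagram_edge m i j -> c i != c j.

Lemma neighbor j : exists l, diagram_edge m j l.
Proof.
have [k kj] : exists k, k != j.
  case: (eqVneq j ord0) => [->|jn]; last by exists ord0; rewrite eq_sym.
  by exists (lift ord0 (Ordinal n_gt0)); rewrite eq_sym neq_lift.
have /connectP [p pth kE] := irr j k.
case: p pth kE => [|l p] /=; first by move=> _ kE; rewrite -kE eqxx in kj.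
by move=> /andP [e _] _; exists l.
Qed.

Lemma sum_neg (sg : 'I_n.+1 -> R) (sgp : forall l, 0 < sg l) col j :
  c j = ~~ col -> \sum_(l | c l == col) dotp (a l) (a j) / sg l < 0.
Proof.
move=> cj; have [l0 e0] := neighbor j.
have cl0 : c l0 == col.
  by have := c_bip _ _ e0; rewrite cj; case: (c l0); case: (col).
rewrite (bigD1 l0) //=.
have neq l : c l == col -> l != j.
  by move=> /eqP cl; apply/eqP => lj; move: cj; rewrite -lj cl; case: (col).
have term l : c l == col -> dotp (a l) (a j) / sg l <= 0.
  move=> cl; have [m2 ->] := angles _ _ (neq l cl).
  apply: mulr_le0_ge0; last by rewrite invr_ge0 ltW.
  by rewrite oppr_le0 cos_pim_ge0.
have t0 : dotp (a l0) (a j) / sg l0 < 0.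
  have jl0 : j != l0 by rewrite eq_sym neq.
  have [_ h] := angles _ _ jl0.
  rewrite dotpC h pmulr_llt0 ?invr_gt0 // oppr_lt0.
  by apply: cos_pim_gt0; move: e0 => /andP [].
have : \sum_(i | (c i == col) && (i != l0)) dotp (a i) (a j) / sg i <= 0.
  by apply: sumr_le0 => i /andP [ci _]; apply: term.
lra.
Qed.

Lemma side col P Q :
  affine_hull (bip_face a b c col) P -> affine_hull (bip_face a b c (~~ col)) Q ->
  (forall y0 y1, affine_hull (bip_face a b c col) y0 ->
     affine_hull (bip_face a b c (~~ col)) y1 ->
     dotp (P - Q) (P - Q) <= dotp (y0 - y1) (y0 - y1)) ->
  forall j, c j = ~~ col -> dotp (a j) P < b j.
Proof.
move=> hP hQ cl0.
have cxs : chamber a b xs by move=> i; apply: ltW.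
have [v hv] : exists v : 'I_n.+1 -> 'rV[R]_n, forall k i, i != k -> dotp (a i) (v k) = b i.
  have [v hv] := boolp.choice (fun k => @vertex_ex _ _ a b xs M xs_int bnd k).
  by exists v.
have sgp l : 0 < b l - dotp (a l) (v l).
  rewrite subr_gt0 ltNge; apply/negP => H.
  have d0 : xs - v l = 0.
    apply: (@recession _ _ a b M bnd _ _ cxs) => i; rewrite dotpBr.
    case: (eqVneq i l) => [->|il]; first by have := xs_int l; lra.
    by rewrite hv //; have := xs_int i; lra.
  have := xs_int l; have : dotp (a l) (xs - v l) = 0 by rewrite d0 dotp0r.
  rewrite dotpBr; lra.
have face l col' : c l != col' -> bip_face a b c col' (v l).
  move=> cl; split.
    move=> i; case: (eqVneq i l) => [->|il]; first by have := sgp l; lra.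
    by rewrite hv.
  move=> i ci; apply: hv; apply/eqP => il; move: cl; by rewrite -il ci eqxx.
have oP l : c l = ~~ col -> dotp (P - Q) (v l - P) = 0.
  move=> cl; apply: orth_min => s.
  have fl : bip_face a b c col (v l) by apply: face; rewrite cl; case: (col).
  have := cl0 ((1 - s) *: P + s *: v l) Q (@aff_add _ _ _ _ _ s hP fl) hQ.
  have -> : (1 - s) *: P + s *: v l - Q = P - Q + s *: (v l - P) by
    apply/rowP => t; rewrite !mxE; ring.
  by [].
have oQ l : c l = col -> dotp (P - Q) (v l - Q) = 0.
  move=> cl; apply/eqP; rewrite -oppr_eq0 -dotpNr; apply/eqP; apply: orth_min => s.
  have fl : bip_face a b c (~~ col) (v l) by apply: face; rewrite cl; case: (col).
  have := cl0 P ((1 - s) *: Q + s *: v l) hP (@aff_add _ _ _ _ _ s hQ fl).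
  have -> : P - ((1 - s) *: Q + s *: v l) = P - Q + s *: (- (v l - Q)) by
    apply/rowP => t; rewrite !mxE; ring.
  by [].
have HP i : c i = col -> dotp (a i) P = b i by apply: aff_tight hP.
have HQ i : c i = ~~ col -> dotp (a i) Q = b i by apply: aff_tight hQ.
have PQ : P - Q != 0.
  apply/negP => /eqP PQ0.
  have PQe : P = Q by apply/eqP; rewrite -subr_eq0 PQ0.
  have tight i : dotp (a i) P = b i.
    case: (boolP (c i == col)) => [/eqP|]; first exact: HP.
    by move=> h; rewrite PQe; apply: HQ; move: h; case: (c i); case: (col).
  have d0 : xs - P = 0.
    by apply: (@recession _ _ a b M bnd _ _ cxs) => i; rewrite dotpBr tight; have := xs_int i; lra.
  have := xs_int ord0; have : dotp (a ord0) (xs - P) = 0 by rewrite d0 dotp0r.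
  by rewrite dotpBr tight; lra.
have wpos : 0 < dotp (P - Q) (P - Q).
  rewrite lt_neqAle dotp_ge0 andbT eq_sym; apply/negP => /eqP /dotp_eq0 h.
  by rewrite h eqxx in PQ.
move=> j cj.
have := @core_id _ _ a b xs M xs_int bnd v hv sgp c col P Q oP oQ j (a j) cj.
have := @sum_neg _ sgp _ _ cj.
set S := \sum_(_ | _) _ => Sn E.
have : dotp (P - Q) (a j) < 0 by rewrite E pmulr_rlt0.
by rewrite dotpC dotpBr HQ //; lra.
Qed.
End Side.
Section Fin.
Context {R : realType} {n : nat}.
Variables (a : 'I_n.+1 -> 'rV[R]_n) (b : 'I_n.+1 -> R).

Lemma interior_of p : (forall i, dotp (a i) p < b i) -> interior (chamber a b) p.
Proof.
move=> hp.
suff : \forall y \near p, forall i, dotp (a i) y <= b i by [].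
eapply filter_forall; first exact: nbhs_filter.
move=> i.
set K := 1 + \sum_j `|a i 0 j|.
have K0 : 0 < K by rewrite /K ltr_pwDl // sumr_ge0.
have s0 : 0 < b i - dotp (a i) p by rewrite subr_gt0.
change (nbhs p [set y | dotp (a i) y <= b i]).
apply/nbhs_ballP; exists ((b i - dotp (a i) p) / K); first by rewrite /= divr_gt0.
move=> y hy.
have hb j : `|y 0 j - p 0 j| < (b i - dotp (a i) p) / K.
  by move: hy; rewrite /ball /= /mx_ball => -[_ /(_ 0 j)]; rewrite /ball /= distrC.
have : dotp (a i) (y - p) <= (\sum_j `|a i 0 j|) * ((b i - dotp (a i) p) / K).
  rewrite dotpE mulr_suml; apply: ler_sum => j _.
  apply: (le_trans (ler_norm _)); rewrite normrM ?mxE.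
  by apply: ler_wpM2l => //; apply: ltW; have := hb j; rewrite ?mxE.
have : (\sum_j `|a i 0 j|) * ((b i - dotp (a i) p) / K) < b i - dotp (a i) p.
  rewrite mulrA ltr_pdivrMr //.
  by rewrite /K [X in _ < X]mulrDr mulr1 [X in _ < _ + X]mulrC ltrDr.
move=> h2 h1 /=; move: h1; rewrite dotpBr; lra.
Qed.

Lemma relint (a_unit : forall i, dotp (a i) (a i) = 1) c col P :
  affine_hull (bip_face a b c col) P ->
  (forall j, c j = ~~ col -> dotp (a j) P < b j) ->
  rel_interior (bip_face a b c col) P.
Proof.
move=> hP hs.
have tight i : c i = col -> dotp (a i) P = b i by apply: aff_tight hP.
have neg i : c i != col -> c i = ~~ col by case: (c i); case: (col).
set e := \big[Order.min/1]_(i | c i != col) (b i - dotp (a i) P).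
have e0 : 0 < e.
  by apply: lt_bigmin => // i ci; rewrite subr_gt0; apply: hs (neg _ ci).
have ele i : c i != col -> e <= b i - dotp (a i) P.
  by move=> ci; apply: bigmin_le_cond.
split.
  split; last exact: tight.
  move=> i; case: (eqVneq (c i) col) => [ci|ci]; first by rewrite tight.
  exact/ltW/hs/neg.
exists e; split => // y hy hd.
split; last by move=> i ci; apply: (@aff_tight _ _ a b c col y i hy ci).
move=> i; case: (eqVneq (c i) col) => [ci|ci]; first by rewrite (@aff_tight _ _ a b c col y i hy ci).
have := @dotp_small _ _ (a i) (y - P) e e0 (a_unit i) hd.
have := ele i ci.
rewrite dotpBr; lra.
Qed.
End Fin.

Lemma dsym {R : realType} {n : nat} (u v : 'rV[R]_n) :
  dotp (u - v) (u - v) = dotp (v - u) (v - u).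
Proof. by rewrite -opprB dotpNl dotpNr opprK. Qed.


Theorem lemma8p5 (R : realType) (n : nat) (n_gt0 : (0 < n)%N)
  (a : 'I_n.+1 -> 'rV[R]_n) (b : 'I_n.+1 -> R) (m : 'I_n.+1 -> 'I_n.+1 -> nat)
  (a_unit : forall i, dotp (a i) (a i) = 1)
  (angles : forall i j, i != j ->
     (2 <= m i j)%N /\ dotp (a i) (a j) = - cos (pi / (m i j)%:R))
  (sigma_nondeg : exists x, forall i, dotp (a i) x < b i)
  (sigma_bounded : exists M : R, forall x, chamber a b x -> dotp x x <= M)
  (irr : irreducible_diagram m)
  (notA : ~ type_Atilde m)
  (c : 'I_n.+1 -> bool)
  (c_bip : forall i j, diagram_edge m i j -> c i != c j)
  (x0 x1 : 'rV[R]_n)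
  (x0B : affine_hull (bip_face a b c false) x0)
  (x1B : affine_hull (bip_face a b c true) x1)
  (x_closest : forall y0 y1,
     affine_hull (bip_face a b c false) y0 ->
     affine_hull (bip_face a b c true) y1 ->
     dotp (x0 - x1) (x0 - x1) <= dotp (y0 - y1) (y0 - y1)) :
  rel_interior (bip_face a b c false) x0 /\
  rel_interior (bip_face a b c true) x1 /\
  exists t : R, interior (chamber a b) ((1 - t) *: x0 + t *: x1).
Proof.
have [xs xs_int] := sigma_nondeg.
have [M bnd] := sigma_bounded.
have h0 := @side _ _ a b m n_gt0 angles xs M xs_int bnd irr c c_bip false x0 x1 x0B x1B x_closest.
have cl1 : forall y0 y1,
     affine_hull (bip_face a b c true) y0 ->
     affine_hull (bip_face a b c (~~ true)) y1 ->
     dotp (x1 - x0) (x1 - x0) <= dotp (y0 - y1) (y0 - y1).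
  by move=> y0 y1 hy0 hy1; rewrite dsym (dsym y0); apply: x_closest.
have h1 := @side _ _ a b m n_gt0 angles xs M xs_int bnd irr c c_bip true x1 x0 x1B x0B cl1.
split; first exact: relint.
split; first exact: relint.
exists (1 / 2); apply: interior_of => i.
rewrite dotpDr !dotpZr.
case ci: (c i).
  have := h0 i ci; have := @aff_tight _ _ a b c true x1 i x1B ci; lra.
have := h1 i ci; have := @aff_tight _ _ a b c false x0 i x0B ci; lra.
Qed.
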